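(* If $\mathscr{S}_1,\mathscr{S}_2\subset\mathbb{T}^n$ are projected tropical Metzler spectrahedra, then $\mathrm{tconv}(\mathscr{S}_1\cup\mathscr{S}_2)$ is a projected tropical Metzler spectrahedron.
   Context: $\mathbb{T}=\mathbb{R}\cup\{-\infty\}$. Tropically convex: $\max(\lambda+x,\mu+y)\in X$ for $x,y\in X$, $\lambda,\mu\in\mathbb{T}$ with $\max(\lambda,\mu)=0$; $\mathrm{tconv}(Z)$ is the smallest tropically convex set containing $Z$. Signed tropical numbers $\mathbb{S}=(\{\pm1\}\times\mathbb{R})\cup\{(0,-\infty)\}$, $(1,a)$ positive, $(-1,a)$ negative, modulus $|(s,a)|=a$; a matrix over $\mathbb{S}$ is tropical Metzler if off-diagonal entries are negative or $(0,-\infty)$. For symmetric tropical Metzler $Q^{(0)},\dots,Q^{(N)}$, with $x_0:=0$ and $x\in\mathbb{T}^N$: $Q^{+}_{ii}(x)=\max\{|Q^{(k)}_{ii}|+x_k: Q^{(k)}_{ii}\text{ positive}\}$, $Q^-_{ii}$ likewise with negative entries ($\max\emptyset=-\infty$), $Q_{ij}(x)=\max_k(|Q^{(k)}_{ij}|+x_k)$ ($i\ne j$); the tropical Metzler spectrahedron $\mathcal{S}(Q^{(0)}|Q^{(1)},\dots,Q^{(N)})=\{x\in\mathbb{T}^N: Q^+_{ii}(x)\ge Q^-_{ii}(x)\ \forall i,\ Q^+_{ii}(x)+Q^+_{jj}(x)\ge2Q_{ij}(x)\ \forall i\ne j\}$. A subset of $\mathbb{T}^d$ is a projected tropical Metzler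 spectrahedron if it is the image of a tropical Metzler spectrahedron in $\mathbb{T}^{d+d'}$ ($d'\ge0$) under projection onto the first $d$ coordinates. *)

(* Defs.v *)
From Stdlib Require Import Reals List.
Import ListNotations.
Open Scope R_scope.

(* Tropical numbers T = R ∪ {-oo}: None encodes -oo. *)
Definition trop := option R.

Definition tmax (a b : trop) : trop :=
  match a, b with
  | None, _ => b
  | _, None => a
  | Some x, Some y => Some (Rmax x y)
  end.

(* classical addition = tropical multiplication; -oo absorbing *)
Definition tplus (a b : trop) : trop :=
  match a, b with
  | Some x, Some y => Some (x + y)
  | _, _ => None
  end.

Definition tle (a b : trop) : Prop :=
  match a, b with
  | None, _ => True
  | Some _, None => False
  | Some x, Some y => x <= y
  end.

Definition tmax_list (l : list trop) : trop := fold_right tmax None l.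

(* Points of T^d are lists of length d; subsets are predicates on lists. *)
Definition tpoint := list trop.

Fixpoint zipWith (f : trop -> trop -> trop) (x y : list trop) : list trop :=
  match x, y with
  | a :: x', b :: y' => f a b :: zipWith f x' y'
  | _, _ => []
  end.

Definition tcomb (lam mu : trop) (x y : tpoint) : tpoint :=
  zipWith (fun a b => tmax (tplus lam a) (tplus mu b)) x y.

Definition tconvex (X : tpoint -> Prop) : Prop :=
  forall x y lam mu, X x -> X y -> tmax lam mu = Some 0 -> X (tcomb lam mu x y).

Definition tconv (d : nat) (Z : tpoint -> Prop) : tpoint -> Prop :=
  fun p => length p = d /\
    forall X : tpoint -> Prop, tconvex X -> (forall z, Z z -> X z) -> X p.

(* Signed tropical numbers: (1,a), (-1,a), (0,-oo). *)
Inductive strop : Type :=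
  | SPos : R -> strop
  | SNeg : R -> strop
  | SZero : strop.

Definition smod (s : strop) : trop :=
  match s with
  | SPos a => Some a
  | SNeg a => Some a
  | SZero => None
  end.

(* A family of m x m matrices Q^(0), ..., Q^(N): Q k i j is entry (i,j) of Q^(k),
   indices i, j < m, k <= N (0-based matrix indices). *)
Definition mfamily := nat -> nat -> nat -> strop.

Definition is_symmetric_fam (m N : nat) (Q : mfamily) : Prop :=
  forall k i j, (k <= N)%nat -> (i < m)%nat -> (j < m)%nat -> Q k i j = Q k j i.

Definition is_metzler_fam (m N : nat) (Q : mfamily) : Prop :=
  forall k i j, (k <= N)%nat -> (i < m)%nat -> (j < m)%nat -> i <> j ->
    (exists a, Q k i j = SNeg a) \/ Q k i j = SZero.

(* x_0 := 0, x_k = k-th coordinate (1-based) of x for 1 <= k <= N *)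
Definition xcoord (x : tpoint) (k : nat) : trop :=
  match k with
  | O => Some 0
  | S k' => nth k' x None
  end.

Definition Qplus (N : nat) (Q : mfamily) (x : tpoint) (i : nat) : trop :=
  tmax_list (map (fun k => match Q k i i with
                           | SPos a => tplus (Some a) (xcoord x k)
                           | _ => None end) (seq 0 (S N))).

Definition Qminus (N : nat) (Q : mfamily) (x : tpoint) (i : nat) : trop :=
  tmax_list (map (fun k => match Q k i i with
                           | SNeg a => tplus (Some a) (xcoord x k)
                           | _ => None end) (seq 0 (S N))).

Definition Qoff (N : nat) (Q : mfamily) (x : tpoint) (i j : nat) : trop :=
  tmax_list (map (fun k => tplus (smod (Q k i j)) (xcoord x k)) (seq 0 (S N))).

Definition tms (m N : nat) (Q : mfamily) : tpoint -> Prop :=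
  fun x => length x = N /\
    (forall i, (i < m)%nat -> tle (Qminus N Q x i) (Qplus N Q x i)) /\
    (forall i j, (i < m)%nat -> (j < m)%nat -> i <> j ->
       tle (tplus (Qoff N Q x i j) (Qoff N Q x i j))
           (tplus (Qplus N Q x i) (Qplus N Q x j))).

Definition proj_tms (d : nat) (P : tpoint -> Prop) : Prop :=
  exists (d' m : nat) (Q : mfamily),
    is_symmetric_fam m (d + d') Q /\ is_metzler_fam m (d + d') Q /\
    forall p, P p <-> exists y, tms m (d + d') Q y /\ firstn d y = p.

(* Main.v *)
Require Import Defs.
From Stdlib Require Import Reals List Lia Lra Arith.
Import ListNotations.
Open Scope R_scope.

Ltac tfin :=
  simpl in *; unfold Rmax in *;
  repeat match goal with
         | H : Some _ = Some _ |- _ => injection H; clear H; intro H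
         | |- context [Rle_dec ?a ?b] => destruct (Rle_dec a b)
         | H : context [Rle_dec ?a ?b] |- _ => destruct (Rle_dec a b)
         end;
  try (f_equal; lra); try lra; try tauto; try discriminate; try congruence.

Ltac tdes := repeat match goal with a : trop |- _ => destruct a end.
Ltac tsolve := intros; tdes; tfin.

Lemma tle_refl a : tle a a. Proof. tsolve. Qed.
Lemma tle_trans a b c : tle a b -> tle b c -> tle a c. Proof. tsolve. Qed.
Lemma tle_antisym a b : tle a b -> tle b a -> a = b. Proof. tsolve. Qed.
Lemma tle_None a : tle None a. Proof. tsolve. Qed.
Lemma tmax_le_l a b : tle a (tmax a b). Proof. tsolve. Qed.
Lemma tmax_le_r a b : tle b (tmax a b). Proof. tsolve. Qed.
Lemma tmax_lub a b c : tle a c -> tle b c -> tle (tmax a b) c. Proof. tsolve. Qed.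
Lemma tmax_comm a b : tmax a b = tmax b a. Proof. tsolve. Qed.
Lemma tmax_assoc a b c : tmax a (tmax b c) = tmax (tmax a b) c. Proof. tsolve. Qed.
Lemma tmax_None_r a : tmax a None = a. Proof. tsolve. Qed.
Lemma tplus_comm a b : tplus a b = tplus b a. Proof. tsolve. Qed.
Lemma tplus_None_r a : tplus a None = None. Proof. tsolve. Qed.
Lemma tplus_0_l a : tplus (Some 0) a = a. Proof. tsolve. Qed.
Lemma tplus_0_r a : tplus a (Some 0) = a. Proof. tsolve. Qed.
Lemma tplus_mono a b c d : tle a b -> tle c d -> tle (tplus a c) (tplus b d). Proof. tsolve. Qed.
Lemma tplus_tmax a b c : tplus a (tmax b c) = tmax (tplus a b) (tplus a c). Proof. tsolve. Qed.
Lemma tplus_assoc a b c : tplus a (tplus b c) = tplus (tplus a b) c. Proof. tsolve. Qed.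
Lemma tplus_cancel c a : tplus (Some c) (tplus (Some (- c)) a) = a. Proof. tsolve. Qed.
Lemma tle_cross a b : tle (tplus a b) (tmax (tplus a a) (tplus b b)). Proof. tsolve. Qed.
Lemma tmax_le_iff a b c : tle (tmax a b) c -> tle a c /\ tle b c. Proof. tsolve. Qed.
Lemma tle_plus_None a : tle a None -> a = None. Proof. tsolve. Qed.
Lemma tplus_self_None a : tplus a a = None -> a = None. Proof. tsolve. Qed.
Lemma tmax0_le_l a b : tmax a b = Some 0 -> tle a (Some 0). Proof. tsolve. Qed.
Lemma tmax0_le_r a b : tmax a b = Some 0 -> tle b (Some 0). Proof. tsolve. Qed.
Lemma sq_eq l x : tplus (tplus l x) (tplus l x) = tplus l (tplus x (tplus l x)).
Proof. tsolve. Qed.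
Lemma scale_q l o p q : tle (tplus o o) (tplus p q) ->
  tle (tplus (tplus l o) (tplus l o)) (tplus (tplus l p) (tplus l q)).
Proof. tsolve. Qed.
Lemma comb_q l mu o1 p1 q1 o2 p2 q2 : tle (tplus o1 o1) (tplus p1 q1) -> tle (tplus o2 o2) (tplus p2 q2) ->
 tle (tplus (tmax (tplus l o1) (tplus mu o2)) (tmax (tplus l o1) (tplus mu o2)))
     (tplus (tmax (tplus l p1) (tplus mu p2)) (tmax (tplus l q1) (tplus mu q2))).
Proof. tsolve. Qed.
Lemma tmax_list_ub l a : In a l -> tle a (tmax_list l).
Proof.
  induction l as [|b l IH]; simpl; [tauto|].
  intros [->|H].
  - apply tmax_le_l.
  - eapply tle_trans; [apply IH, H| apply tmax_le_r].
Qed.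

Lemma tmax_list_lub l c : (forall a, In a l -> tle a c) -> tle (tmax_list l) c.
Proof.
  induction l as [|b l IH]; simpl; intros H.
  - exact I.
  - apply tmax_lub; auto.
Qed.

Lemma tmax_list_ext l1 l2 :
  (forall a, In a l1 -> a = None \/ In a l2) ->
  (forall a, In a l2 -> a = None \/ In a l1) ->
  tmax_list l1 = tmax_list l2.
Proof.
  intros H1 H2; apply tle_antisym; apply tmax_list_lub; intros a Ha.
  - destruct (H1 a Ha) as [->|H]; [apply tle_None|now apply tmax_list_ub].
  - destruct (H2 a Ha) as [->|H]; [apply tle_None|now apply tmax_list_ub].
Qed.

Lemma tmax_list_map_tmax {A} (f g : A -> trop) l :
  tmax_list (map (fun k => tmax (f k) (g k)) l) =
  tmax (tmax_list (map f l)) (tmax_list (map g l)).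
Proof.
  induction l as [|a l IH]; simpl; [reflexivity|]. rewrite IH.
  rewrite !tmax_assoc. f_equal. rewrite <- !tmax_assoc. f_equal. apply tmax_comm.
Qed.

Lemma tmax_list_map_tplus {A} c (f : A -> trop) l :
  tmax_list (map (fun k => tplus c (f k)) l) = tplus c (tmax_list (map f l)).
Proof.
  induction l as [|a l IH]; simpl; [now rewrite tplus_None_r|]. rewrite IH.
  now rewrite tplus_tmax.
Qed.

Lemma tmax_list_None {A} (f : A -> trop) l :
  (forall k, In k l -> f k = None) -> tmax_list (map f l) = None.
Proof.
  induction l as [|a l IH]; simpl; intros H; [reflexivity|].
  rewrite H by auto. rewrite IH by auto. reflexivity.
Qed.

Definition termP (q : strop) (t : trop) : trop :=
  match q with SPos a => tplus (Some a) t | _ => None end.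
Definition termM (q : strop) (t : trop) : trop :=
  match q with SNeg a => tplus (Some a) t | _ => None end.

Definition lin (N : nat) (h : nat -> trop -> trop) (e : nat -> trop) : trop :=
  tmax_list (map (fun k => h k (e k)) (seq 0 (S N))).

Definition QplusE N (Q : mfamily) e i := lin N (fun k => termP (Q k i i)) e.
Definition QminusE N (Q : mfamily) e i := lin N (fun k => termM (Q k i i)) e.
Definition offt (q : strop) (t : trop) : trop := tplus (smod q) t.
Definition QoffE N (Q : mfamily) e i j := lin N (fun k => offt (Q k i j)) e.

Definition tmsE (m N : nat) (Q : mfamily) (e : nat -> trop) : Prop :=
  (forall i, (i < m)%nat -> tle (QminusE N Q e i) (QplusE N Q e i)) /\
  (forall i j, (i < m)%nat -> (j < m)%nat -> i <> j ->
     tle (tplus (QoffE N Q e i j) (QoffE N Q e i j))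
         (tplus (QplusE N Q e i) (QplusE N Q e j))).

Lemma tms_iff m N Q x : tms m N Q x <-> length x = N /\ tmsE m N Q (xcoord x).
Proof. split; intro H; exact H. Qed.

Definition islin (h : trop -> trop) :=
  (forall l a, h (tplus l a) = tplus l (h a)) /\ (forall a b, h (tmax a b) = tmax (h a) (h b)).

Lemma termP_lin q : islin (termP q).
Proof. split; intros; destruct q; simpl; tsolve. Qed.
Lemma termM_lin q : islin (termM q).
Proof. split; intros; destruct q; simpl; tsolve. Qed.
Lemma smod_lin q : islin (offt q).
Proof. unfold offt; split; intros; destruct q; simpl; tsolve. Qed.

Lemma lin_ext N h e1 e2 : (forall k, (k <= N)%nat -> e1 k = e2 k) -> lin N h e1 = lin N h e2.
Proof.
  intros H; unfold lin; f_equal; apply map_ext_in; intros k Hk.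
  apply in_seq in Hk. rewrite H by lia. reflexivity.
Qed.

Lemma lin_comb N h l m e1 e2 : (forall k, islin (h k)) ->
  lin N h (fun k => tmax (tplus l (e1 k)) (tplus m (e2 k))) =
  tmax (tplus l (lin N h e1)) (tplus m (lin N h e2)).
Proof.
  intros Hl; unfold lin.
  rewrite <- !tmax_list_map_tplus, <- tmax_list_map_tmax. f_equal.
  apply map_ext; intro k. destruct (Hl k) as [H1 H2]. now rewrite H2, !H1.
Qed.

Lemma lin_scale N h l e : (forall k, islin (h k)) ->
  lin N h (fun k => tplus l (e k)) = tplus l (lin N h e).
Proof.
  intros Hl; unfold lin. rewrite <- !tmax_list_map_tplus. f_equal.
  apply map_ext; intro k. destruct (Hl k) as [H1 H2]. now rewrite H1.
Qed.

Lemma tmsE_ext m N Q e1 e2 : (forall k, (k <= N)%nat -> e1 k = e2 k) ->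
  tmsE m N Q e1 -> tmsE m N Q e2.
Proof.
  intros H [A B]; unfold tmsE, QplusE, QminusE, QoffE in *.
  split; intros; rewrite <- !(lin_ext N _ _ _ H); auto.
Qed.

Lemma tmsE_scale m N Q l e : tmsE m N Q e -> tmsE m N Q (fun k => tplus l (e k)).
Proof.
  intros [A B]; unfold tmsE, QplusE, QminusE, QoffE in *.
  split; intros.
  - rewrite !lin_scale by (intros; apply termP_lin || apply termM_lin).
    apply tplus_mono; [apply tle_refl|auto].
  - rewrite !lin_scale by (intros; apply termP_lin || apply smod_lin).
    apply scale_q; auto.
Qed.

Lemma tmsE_comb m N Q l mu e1 e2 : tmax l mu = Some 0 ->
  tmsE m N Q e1 -> tmsE m N Q e2 ->
  tmsE m N Q (fun k => tmax (tplus l (e1 k)) (tplus mu (e2 k))).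
Proof.
  intros H0 [A1 B1] [A2 B2]; unfold tmsE, QplusE, QminusE, QoffE in *.
  split; intros.
  - rewrite !lin_comb by (intros; apply termP_lin || apply termM_lin).
    apply tmax_lub.
    + eapply tle_trans; [|apply tmax_le_l]. apply tplus_mono; [apply tle_refl|auto].
    + eapply tle_trans; [|apply tmax_le_r]. apply tplus_mono; [apply tle_refl|auto].
  - rewrite !lin_comb by (intros; apply termP_lin || apply smod_lin).
    apply comb_q; auto.
Qed.
Lemma length_zipWith f x y : length (zipWith f x y) = Nat.min (length x) (length y).
Proof. revert y; induction x as [|a x IH]; intros [|b y]; simpl; auto. Qed.

Lemma nth_zipWith f x y k : (k < length x)%nat -> (k < length y)%nat ->
  nth k (zipWith f x y) None = f (nth k x None) (nth k y None).
Proof.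
  revert y k; induction x as [|a x IH]; intros [|b y] k H1 H2; simpl in *; try lia.
  destruct k; auto. apply IH; lia.
Qed.

Lemma firstn_zipWith f n x y : firstn n (zipWith f x y) = zipWith f (firstn n x) (firstn n y).
Proof.
  revert x y; induction n as [|n IH]; intros [|a x] [|b y]; simpl; auto.
  now rewrite IH.
Qed.

Lemma zipWith_map f (g h : nat -> trop) l :
  zipWith f (map g l) (map h l) = map (fun k => f (g k) (h k)) l.
Proof. induction l; simpl; congruence. Qed.

Lemma tms_convex m N Q x y l mu : tmax l mu = Some 0 ->
  tms m N Q x -> tms m N Q y -> tms m N Q (tcomb l mu x y).
Proof.
  intros H0 Hx Hy. apply tms_iff in Hx as [Lx Ex]. apply tms_iff in Hy as [Ly Ey].
  apply tms_iff; split.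
  - unfold tcomb; rewrite length_zipWith; lia.
  - eapply tmsE_ext; [|apply (tmsE_comb _ _ _ _ _ _ _ H0 Ex Ey)].
    intros k Hk. destruct k as [|k]; simpl.
    + now rewrite !tplus_0_r.
    + unfold tcomb. rewrite nth_zipWith by lia. reflexivity.
Qed.

Lemma proj_convex (P : tpoint -> Prop) d m N Q :
  (forall p, P p <-> exists y, tms m N Q y /\ firstn d y = p) -> tconvex P.
Proof.
  intros HP x y l mu Hx Hy H0. apply HP in Hx as [y1 [T1 F1]]. apply HP in Hy as [y2 [T2 F2]].
  apply HP. exists (tcomb l mu y1 y2). split.
  - now apply tms_convex.
  - unfold tcomb. now rewrite firstn_zipWith, F1, F2.
Qed.

Lemma xcoord_map_seq (e : nat -> trop) N k : (1 <= k <= N)%nat ->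
  xcoord (map e (seq 1 N)) k = e k.
Proof.
  intros H. destruct k as [|k]; [lia|]. simpl.
  rewrite nth_indep with (d' := e 0%nat) by (rewrite length_map, length_seq; lia).
  rewrite map_nth, seq_nth by lia. f_equal; lia.
Qed.

Lemma tms_of_val m N Q e : e 0%nat = Some 0 -> tmsE m N Q e -> tms m N Q (map e (seq 1 N)).
Proof.
  intros H0 HE. apply tms_iff; split; [now rewrite length_map, length_seq|].
  eapply tmsE_ext; [|exact HE]. intros k Hk. destruct k as [|k].
  - simpl; auto.
  - rewrite xcoord_map_seq by lia. reflexivity.
Qed.

Lemma firstn_as_map y n : (n <= length y)%nat -> firstn n y = map (xcoord y) (seq 1 n).
Proof.
  revert y; induction n as [|n IH]; intros y H; [reflexivity|].
  destruct y as [|a y]; simpl in *; [lia|]. f_equal.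
  rewrite IH by lia. rewrite <- (seq_shift n 1), map_map. apply map_ext_in.
  intros k Hk; apply in_seq in Hk. destruct k; [lia|reflexivity].
Qed.

Lemma firstn_map_seq (f : nat -> trop) a n N : (n <= N)%nat ->
  firstn n (map f (seq a N)) = map f (seq a n).
Proof.
  revert a N; induction n as [|n IH]; intros a N H; [reflexivity|].
  destruct N as [|N]; [lia|]. simpl. f_equal. apply IH; lia.
Qed.
From Stdlib Require Import Bool.
Open Scope nat_scope.
Definition symB (m : nat) (Q : mfamily) :=
  forall k i j, (i < m)%nat -> (j < m)%nat -> Q k i j = Q k j i.
Definition metzB (m : nat) (Q : mfamily) :=
  forall k i j, (i < m)%nat -> (j < m)%nat -> i <> j ->
    (exists a, Q k i j = SNeg a) \/ Q k i j = SZero.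

Definition blockdiag2 (ma : nat) (A B : mfamily) : mfamily :=
  fun k i j => if Nat.ltb i ma then (if Nat.ltb j ma then A k i j else SZero)
               else (if Nat.ltb j ma then SZero else B k (i - ma)%nat (j - ma)%nat).

Lemma bd_A ma A B k i j : (i < ma)%nat -> (j < ma)%nat -> blockdiag2 ma A B k i j = A k i j.
Proof. intros; unfold blockdiag2. rewrite !(proj2 (Nat.ltb_lt _ _)) by lia. auto. Qed.
Lemma bd_B ma A B k i j : blockdiag2 ma A B k (ma + i) (ma + j) = B k i j.
Proof.
  unfold blockdiag2. rewrite !(proj2 (Nat.ltb_ge _ _)) by lia. f_equal; lia.
Qed.
Lemma bd_off ma A B k i j : (i < ma <= j \/ j < ma <= i)%nat -> blockdiag2 ma A B k i j = SZero.
Proof.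
  intros [H|H]; unfold blockdiag2.
  - rewrite (proj2 (Nat.ltb_lt i ma)) by lia. rewrite (proj2 (Nat.ltb_ge j ma)) by lia. auto.
  - rewrite (proj2 (Nat.ltb_lt j ma)) by lia. rewrite (proj2 (Nat.ltb_ge i ma)) by lia. auto.
Qed.

Lemma lin_hext N h1 h2 e : (forall k t, h1 k t = h2 k t) -> lin N h1 e = lin N h2 e.
Proof. intros H; unfold lin; f_equal; apply map_ext; auto. Qed.

Lemma QoffE_zero N (Q : mfamily) e i j : (forall k, Q k i j = SZero) -> QoffE N Q e i j = None.
Proof.
  intros H. unfold QoffE, lin. apply tmax_list_None. intros k _. now rewrite H.
Qed.

Lemma tmsE_blockdiag2 ma mb N A B e :
  tmsE (ma + mb) N (blockdiag2 ma A B) e <-> tmsE ma N A e /\ tmsE mb N B e.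
Proof.
  unfold tmsE, QplusE, QminusE, QoffE.
  split.
  - intros [H1 H2]. split; split.
    + intros i Hi. specialize (H1 i ltac:(lia)).
      erewrite !(lin_hext N (fun k => termP _)) in H1 by (intros; rewrite bd_A by lia; reflexivity).
      erewrite !(lin_hext N (fun k => termM _)) in H1 by (intros; rewrite bd_A by lia; reflexivity).
      exact H1.
    + intros i j Hi Hj Hij. specialize (H2 i j ltac:(lia) ltac:(lia) Hij).
      erewrite !(lin_hext N (fun k => termP (blockdiag2 _ _ _ k i i))) in H2
        by (intros; rewrite bd_A by lia; reflexivity).
      erewrite !(lin_hext N (fun k => termP (blockdiag2 _ _ _ k j j))) in H2
        by (intros; rewrite bd_A by lia; reflexivity).
      erewrite !(lin_hext N (fun k => offt (blockdiag2 _ _ _ k i j))) in H2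
        by (intros; rewrite bd_A by lia; reflexivity).
      exact H2.
    + intros i Hi. specialize (H1 (ma + i)%nat ltac:(lia)).
      erewrite !(lin_hext N (fun k => termP _)) in H1 by (intros; rewrite bd_B; reflexivity).
      erewrite !(lin_hext N (fun k => termM _)) in H1 by (intros; rewrite bd_B; reflexivity).
      exact H1.
    + intros i j Hi Hj Hij. specialize (H2 (ma+i)%nat (ma+j)%nat ltac:(lia) ltac:(lia) ltac:(lia)).
      erewrite !(lin_hext N (fun k => termP (blockdiag2 _ _ _ k (ma+i) (ma+i)))) in H2
        by (intros; rewrite bd_B; reflexivity).
      erewrite !(lin_hext N (fun k => termP (blockdiag2 _ _ _ k (ma+j) (ma+j)))) in H2
        by (intros; rewrite bd_B; reflexivity).
      erewrite !(lin_hext N (fun k => offt (blockdiag2 _ _ _ k (ma+i) (ma+j)))) in H2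
        by (intros; rewrite bd_B; reflexivity).
      exact H2.
  - intros [[A1 A2] [B1 B2]]. split.
    + intros i Hi. destruct (Nat.lt_ge_cases i ma) as [Hl|Hl].
      * erewrite !(lin_hext N (fun k => termP _)) by (intros; rewrite bd_A by lia; reflexivity).
        erewrite !(lin_hext N (fun k => termM _)) by (intros; rewrite bd_A by lia; reflexivity).
        auto.
      * replace i with (ma + (i - ma))%nat by lia.
        erewrite !(lin_hext N (fun k => termP _)) by (intros; rewrite bd_B; reflexivity).
        erewrite !(lin_hext N (fun k => termM _)) by (intros; rewrite bd_B; reflexivity).
        apply B1; lia.
    + intros i j Hi Hj Hij.
      destruct (Nat.lt_ge_cases i ma) as [Hl|Hl]; destruct (Nat.lt_ge_cases j ma) as [Hl'|Hl'].
      * erewrite !(lin_hext N (fun k => termP (blockdiag2 _ _ _ k i i)))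
          by (intros; rewrite bd_A by lia; reflexivity).
        erewrite !(lin_hext N (fun k => termP (blockdiag2 _ _ _ k j j)))
          by (intros; rewrite bd_A by lia; reflexivity).
        erewrite !(lin_hext N (fun k => offt (blockdiag2 _ _ _ k i j)))
          by (intros; rewrite bd_A by lia; reflexivity).
        auto.
      * fold (QoffE N (blockdiag2 ma A B) e i j).
        rewrite QoffE_zero by (intros; apply bd_off; lia). exact I.
      * fold (QoffE N (blockdiag2 ma A B) e i j).
        rewrite QoffE_zero by (intros; apply bd_off; lia). exact I.
      * replace i with (ma + (i - ma))%nat by lia. replace j with (ma + (j - ma))%nat by lia.
        erewrite !(lin_hext N (fun k => termP (blockdiag2 _ _ _ k (ma + (i-ma)) (ma + (i-ma)))))
          by (intros; rewrite bd_B; reflexivity).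
        erewrite !(lin_hext N (fun k => termP (blockdiag2 _ _ _ k (ma + (j-ma)) (ma + (j-ma)))))
          by (intros; rewrite bd_B; reflexivity).
        erewrite !(lin_hext N (fun k => offt (blockdiag2 _ _ _ k (ma+(i-ma)) (ma+(j-ma)))))
          by (intros; rewrite bd_B; reflexivity).
        apply B2; lia.
Qed.
Fixpoint bdl (l : list (nat * mfamily)) : nat * mfamily :=
  match l with
  | [] => (0, fun _ _ _ => SZero)
  | (m, A) :: r => (m + fst (bdl r), blockdiag2 m A (snd (bdl r)))
  end.

Lemma tmsE_bdl N e l :
  tmsE (fst (bdl l)) N (snd (bdl l)) e <-> Forall (fun b => tmsE (fst b) N (snd b) e) l.
Proof.
  induction l as [|[m A] l IH]; simpl.
  - split; intros; [constructor|]. split; intros; lia.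
  - rewrite tmsE_blockdiag2, IH. split.
    + intros [H1 H2]; constructor; auto.
    + intros H; inversion H; subst; auto.
Qed.

Lemma sym_bd2 ma mb A B : symB ma A -> symB mb B -> symB (ma + mb) (blockdiag2 ma A B).
Proof.
  intros HA HB k i j Hi Hj; unfold blockdiag2.
  destruct (Nat.ltb_spec i ma), (Nat.ltb_spec j ma); auto. apply HB; lia.
Qed.

Lemma metz_bd2 ma mb A B : metzB ma A -> metzB mb B -> metzB (ma + mb) (blockdiag2 ma A B).
Proof.
  intros HA HB k i j Hi Hj Hij; unfold blockdiag2.
  destruct (Nat.ltb_spec i ma), (Nat.ltb_spec j ma); auto. apply HB; lia.
Qed.

Lemma symmetz_bdl l : Forall (fun b => symB (fst b) (snd b) /\ metzB (fst b) (snd b)) l ->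
  symB (fst (bdl l)) (snd (bdl l)) /\ metzB (fst (bdl l)) (snd (bdl l)).
Proof.
  induction l as [|[m A] l IH]; simpl; intros H.
  - split; intros ? ? ? ? ?; lia.
  - inversion H; subst. destruct H2 as [S1 M1]. destruct (IH H3) as [S2 M2].
    split; [apply sym_bd2|apply metz_bd2]; auto.
Qed.

Definition shift (off NA : nat) (A : mfamily) : mfamily :=
  fun k i j => if (off <=? k) && (k <=? off + NA) then A (k - off) i j else SZero.

Lemma lin_shift N off NA (A : mfamily) i j (g : strop -> trop -> trop) e :
  off + NA <= N -> (forall t, g SZero t = None) ->
  lin N (fun k => g (shift off NA A k i j)) e = lin NA (fun k => g (A k i j)) (fun k => e (off + k)).
Proof.
  intros HN Hg. unfold lin. apply tmax_list_ext.
  - intros a Ha. apply in_map_iff in Ha as [k [<- Hk]]. apply in_seq in Hk.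
    unfold shift. destruct (Nat.leb_spec off k), (Nat.leb_spec k (off + NA)); cbv [andb];
      try (left; apply Hg).
    right. apply in_map_iff. exists (k - off). split.
    + f_equal. f_equal. lia.
    + apply in_seq; lia.
  - intros a Ha. apply in_map_iff in Ha as [k [<- Hk]]. apply in_seq in Hk.
    right. apply in_map_iff. exists (off + k). split.
    + unfold shift. rewrite (proj2 (Nat.leb_le off (off + k))) by lia.
      rewrite (proj2 (Nat.leb_le (off + k) (off + NA))) by lia. cbv [andb].
      f_equal. f_equal. lia.
    + apply in_seq; lia.
Qed.

Lemma tmsE_shift m N off NA A e : off + NA <= N ->
  (tmsE m N (shift off NA A) e <-> tmsE m NA A (fun k => e (off + k))).
Proof.
  intros HN. unfold tmsE, QplusE, QminusE, QoffE.
  setoid_rewrite (fun i j => lin_shift N off NA A i j termP e HN (fun t => eq_refl)).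
  setoid_rewrite (fun i j => lin_shift N off NA A i j termM e HN (fun t => eq_refl)).
  setoid_rewrite (fun i j => lin_shift N off NA A i j offt e HN (fun t => eq_refl)).
  tauto.
Qed.

Lemma symmetz_shift m NA off A : is_symmetric_fam m NA A -> is_metzler_fam m NA A ->
  symB m (shift off NA A) /\ metzB m (shift off NA A).
Proof.
  intros HS HM; split; intros k i j Hi Hj; unfold shift;
    destruct (Nat.leb_spec off k), (Nat.leb_spec k (off + NA)); cbv [andb]; auto.
  - apply HS; lia.
  - intros; apply HM; lia.
Qed.
Lemma lin_single N h e a : a <= N ->
  (forall k, k <> a -> h k (e k) = None) -> h a (e a) = e a -> lin N h e = e a.
Proof.
  intros Ha H1 H2. transitivity (tmax_list [e a]); [|simpl; apply tmax_None_r].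
  unfold lin. apply tmax_list_ext.
  - intros x Hx. apply in_map_iff in Hx as [k [<- Hk]].
    destruct (Nat.eq_dec k a) as [->|Hne]; [right; rewrite H2; now left|left; auto].
  - intros x [<-|[]]. right. apply in_map_iff. exists a. split; auto. apply in_seq; lia.
Qed.

Definition linblock (pos : list nat) (q : nat) : mfamily :=
  fun k i j => if (i =? 0) && (j =? 0) then
                 (if k =? q then SNeg 0%R else if existsb (Nat.eqb k) pos then SPos 0%R else SZero)
               else SZero.

Lemma tmsE_linblock N pos q e : q <= N -> (forall p, In p pos -> p <= N /\ p <> q) ->
  (tmsE 1 N (linblock pos q) e <-> tle (e q) (tmax_list (map e pos))).
Proof.
  intros Hq Hp.
  assert (EM : QminusE N (linblock pos q) e 0 = e q).
  { unfold QminusE. apply lin_single; auto.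
    - intros k Hk. unfold linblock. cbn [Nat.eqb andb].
      rewrite (proj2 (Nat.eqb_neq k q)) by auto. destruct (existsb _ _); reflexivity.
    - unfold linblock. cbn [Nat.eqb andb]. rewrite Nat.eqb_refl. apply tplus_0_l. }
  assert (EP : QplusE N (linblock pos q) e 0 = tmax_list (map e pos)).
  { unfold QplusE, lin. apply tmax_list_ext.
    - intros x Hx. apply in_map_iff in Hx as [k [<- Hk]]. unfold linblock. cbn [Nat.eqb andb].
      destruct (Nat.eqb k q); [now left|].
      destruct (existsb (Nat.eqb k) pos) eqn:E; [|now left].
      right. apply existsb_exists in E as [p [Hp1 Hp2]]. apply Nat.eqb_eq in Hp2; subst p.
      unfold termP. rewrite tplus_0_l. now apply in_map.
    - intros x Hx. apply in_map_iff in Hx as [p [<- Hin]]. right.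
      destruct (Hp p Hin) as [HpN Hpq].
      apply in_map_iff. exists p. split.
      + unfold linblock. cbn [Nat.eqb andb]. rewrite (proj2 (Nat.eqb_neq p q)) by auto.
        assert (existsb (Nat.eqb p) pos = true) as ->.
        { apply existsb_exists. exists p. split; auto. apply Nat.eqb_refl. }
        apply tplus_0_l.
      + apply in_seq; lia. }
  unfold tmsE. split.
  - intros [H _]. rewrite <- EM, <- EP. apply H; lia.
  - intros H. split.
    + intros i Hi. replace i with 0 by lia. now rewrite EM, EP.
    + intros; lia.
Qed.

Lemma symmetz_linblock pos q : symB 1 (linblock pos q) /\ metzB 1 (linblock pos q).
Proof. split; intros k i j Hi Hj; [replace i with 0 by lia; replace j with 0 by lia; auto|lia]. Qed.

Definition quadblock (a b c : nat) : mfamily := fun k i j =>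
  match i, j with
  | 0, 0 => if k =? a then SPos 0%R else SZero
  | 1, 1 => if k =? b then SPos 0%R else SZero
  | 0, 1 | 1, 0 => if k =? c then SNeg 0%R else SZero
  | _, _ => SZero
  end.

Lemma symmetz_quadblock a b c : symB 2 (quadblock a b c) /\ metzB 2 (quadblock a b c).
Proof.
  split; intros k i j Hi Hj.
  - destruct i as [|[|i]]; destruct j as [|[|j]]; try lia; reflexivity.
  - intros Hij. destruct i as [|[|i]]; destruct j as [|[|j]]; try lia; simpl;
      destruct (k =? c); eauto.
Qed.

Lemma tmsE_quadblock N a b c e : a <= N -> b <= N -> c <= N ->
  (tmsE 2 N (quadblock a b c) e <-> tle (tplus (e c) (e c)) (tplus (e a) (e b))).
Proof.
  intros Ha Hb Hc.
  assert (P0 : QplusE N (quadblock a b c) e 0 = e a).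
  { unfold QplusE. apply lin_single; auto.
    - intros k Hk. simpl. rewrite (proj2 (Nat.eqb_neq k a)) by auto. reflexivity.
    - simpl. rewrite Nat.eqb_refl. apply tplus_0_l. }
  assert (P1 : QplusE N (quadblock a b c) e 1 = e b).
  { unfold QplusE. apply lin_single; auto.
    - intros k Hk. simpl. rewrite (proj2 (Nat.eqb_neq k b)) by auto. reflexivity.
    - simpl. rewrite Nat.eqb_refl. apply tplus_0_l. }
  assert (O01 : QoffE N (quadblock a b c) e 0 1 = e c).
  { unfold QoffE. apply lin_single; auto.
    - intros k Hk. simpl. rewrite (proj2 (Nat.eqb_neq k c)) by auto. reflexivity.
    - simpl. rewrite Nat.eqb_refl. apply tplus_0_l. }
  assert (O10 : QoffE N (quadblock a b c) e 1 0 = e c).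
  { unfold QoffE. apply lin_single; auto.
    - intros k Hk. simpl. rewrite (proj2 (Nat.eqb_neq k c)) by auto. reflexivity.
    - simpl. rewrite Nat.eqb_refl. apply tplus_0_l. }
  assert (M : forall i, QminusE N (quadblock a b c) e i = None).
  { intros i. unfold QminusE, lin. apply tmax_list_None. intros k _.
    destruct i as [|[|i]]; simpl; try destruct (k =? a); try destruct (k =? b); reflexivity. }
  unfold tmsE. split.
  - intros [_ H]. specialize (H 0 1 ltac:(lia) ltac:(lia) ltac:(lia)).
    now rewrite O01, P0, P1 in H.
  - intros H. split.
    + intros i _. rewrite M. exact I.
    + intros i j Hi Hj Hij. destruct i as [|[|i]]; destruct j as [|[|j]]; try lia.
      * now rewrite O01, P0, P1.
      * rewrite O10, P0, P1. now rewrite (tplus_comm (e b)).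
Qed.
Lemma Forall_map_seq {B} (P : B -> Prop) (f : nat -> B) n :
  Forall P (map f (seq 0 n)) <-> forall i, i < n -> P (f i).
Proof.
  rewrite Forall_map, Forall_forall. split; intros H i Hi; apply H; apply in_seq in Hi || apply in_seq; lia.
Qed.

Lemma tmsE_allNone m N Q : tmsE m N Q (fun _ => None).
Proof.
  assert (HM : forall i, QminusE N Q (fun _ => None) i = None).
  { intros i; unfold QminusE, lin; apply tmax_list_None; intros k _; destruct (Q k i i); reflexivity. }
  assert (HO : forall i j, QoffE N Q (fun _ => None) i j = None).
  { intros i j; unfold QoffE, lin; apply tmax_list_None; intros k _; unfold offt; apply tplus_None_r. }
  split; intros; [rewrite HM|rewrite HO]; exact I.
Qed.

Lemma tmsE_scale_or m N Q l e : l = None \/ tmsE m N Q e -> tmsE m N Q (fun k => tplus l (e k)).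
Proof. intros [->|H]; [apply tmsE_allNone|now apply tmsE_scale]. Qed.

Lemma tplus_neg_self c : tplus (Some (- c)) (Some c) = Some 0%R.
Proof. tsolve. Qed.

Section Main.
Variables (n N1 N2 m1 m2 : nat) (Q1 Q2 : mfamily).
Hypothesis (HN1 : n <= N1) (HN2 : n <= N2).

Definition Lx := S n.
Definition Mx := n + N1 + 2.
Definition Sx := n + N1 + N2 + 2.
Definition Spx := Sx + n.
Definition NN := Sx + n + n.

Ltac ulia := unfold NN, Spx, Sx, Mx, Lx in *; lia.

Definition blocks : list (nat * mfamily) :=
  (m1, shift Lx N1 Q1) :: (m2, shift Mx N2 Q2) ::
  (1, linblock [0] Lx) :: (1, linblock [0] Mx) :: (1, linblock [Lx; Mx] 0) ::
  map (fun i => (1, linblock [1 + i] (Lx + (1 + i)))) (seq 0 n) ++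
  map (fun i => (1, linblock [1 + i] (Mx + (1 + i)))) (seq 0 n) ++
  map (fun i => (1, linblock [Lx + (1 + i); Mx + (1 + i)] (1 + i))) (seq 0 n) ++
  map (fun i => (2, quadblock Lx (Sx + (1 + i)) (Lx + (1 + i)))) (seq 0 n) ++
  map (fun i => (2, quadblock Mx (Spx + (1 + i)) (Mx + (1 + i)))) (seq 0 n).

Definition Cond (e : nat -> trop) : Prop :=
  tmsE m1 N1 Q1 (fun k => e (Lx + k)) /\ tmsE m2 N2 Q2 (fun k => e (Mx + k)) /\
  tle (e Lx) (tmax_list (map e [0])) /\ tle (e Mx) (tmax_list (map e [0])) /\ tle (e 0) (tmax_list (map e [Lx; Mx])) /\
  (forall i, i < n -> tle (e (Lx + (1 + i))) (tmax_list (map e [1 + i]))) /\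
  (forall i, i < n -> tle (e (Mx + (1 + i))) (tmax_list (map e [1 + i]))) /\
  (forall i, i < n -> tle (e (1 + i)) (tmax_list (map e [Lx + (1 + i); Mx + (1 + i)]))) /\
  (forall i, i < n -> tle (tplus (e (Lx + (1 + i))) (e (Lx + (1 + i))))
                          (tplus (e Lx) (e (Sx + (1 + i))))) /\
  (forall i, i < n -> tle (tplus (e (Mx + (1 + i))) (e (Mx + (1 + i))))
                          (tplus (e Mx) (e (Spx + (1 + i))))).

Lemma big_iff e : tmsE (fst (bdl blocks)) NN (snd (bdl blocks)) e <-> Cond e.
Proof.
  rewrite tmsE_bdl. unfold blocks, Cond.
  rewrite !Forall_cons_iff, !Forall_app, !Forall_map_seq. cbn [fst snd].
  rewrite tmsE_shift by ulia. rewrite tmsE_shift by ulia.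
  rewrite (tmsE_linblock NN [0] Lx e) by (simpl; intuition ulia).
  rewrite (tmsE_linblock NN [0] Mx e) by (simpl; intuition ulia).
  rewrite (tmsE_linblock NN [Lx; Mx] 0 e) by (simpl; intuition ulia).
  assert (E1 : (forall i, i < n -> tmsE 1 NN (linblock [1 + i] (Lx + (1 + i))) e) <->
               (forall i, i < n -> tle (e (Lx + (1 + i))) (tmax_list (map e [1 + i])))).
  { split; intros H i Hi; specialize (H i Hi); rewrite tmsE_linblock in *; auto; try ulia;
      simpl; intros p [<-|[]]; ulia. }
  assert (E2 : (forall i, i < n -> tmsE 1 NN (linblock [1 + i] (Mx + (1 + i))) e) <->
               (forall i, i < n -> tle (e (Mx + (1 + i))) (tmax_list (map e [1 + i])))).
  { split; intros H i Hi; specialize (H i Hi); rewrite tmsE_linblock in *; auto; try ulia;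
      simpl; intros p [<-|[]]; ulia. }
  assert (E3 : (forall i, i < n -> tmsE 1 NN (linblock [Lx + (1 + i); Mx + (1 + i)] (1 + i)) e) <->
               (forall i, i < n -> tle (e (1 + i)) (tmax_list (map e [Lx + (1 + i); Mx + (1 + i)])))).
  { split; intros H i Hi; specialize (H i Hi); rewrite tmsE_linblock in *; auto; try ulia;
      simpl; intros p [<-|[<-|[]]]; ulia. }
  assert (E4 : (forall i, i < n -> tmsE 2 NN (quadblock Lx (Sx + (1 + i)) (Lx + (1 + i))) e) <->
               (forall i, i < n -> tle (tplus (e (Lx + (1 + i))) (e (Lx + (1 + i))))
                          (tplus (e Lx) (e (Sx + (1 + i)))))).
  { split; intros H i Hi; specialize (H i Hi); rewrite tmsE_quadblock in *; auto; ulia. }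
  assert (E5 : (forall i, i < n -> tmsE 2 NN (quadblock Mx (Spx + (1 + i)) (Mx + (1 + i))) e) <->
               (forall i, i < n -> tle (tplus (e (Mx + (1 + i))) (e (Mx + (1 + i))))
                          (tplus (e Mx) (e (Spx + (1 + i)))))).
  { split; intros H i Hi; specialize (H i Hi); rewrite tmsE_quadblock in *; auto; ulia. }
  rewrite E1, E2, E3, E4, E5. tauto.
Qed.
Definition Ev (l mu : trop) (e1 e2 : nat -> trop) (k : nat) : trop :=
  if k <=? n then tmax (tplus l (e1 k)) (tplus mu (e2 k))
  else if k <=? Lx + N1 then tplus l (e1 (k - Lx))
  else if k <=? Mx + N2 then tplus mu (e2 (k - Mx))
  else if k <=? Sx + n then tplus (e1 (k - Sx)) (tplus l (e1 (k - Sx)))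
  else tplus (e2 (k - Spx)) (tplus mu (e2 (k - Spx))).

Ltac evsolve := intros; unfold Ev;
  repeat match goal with |- context [?a <=? ?b] => destruct (Nat.leb_spec a b) end;
  try ulia; try reflexivity; repeat f_equal; ulia.

Lemma Ev_z l mu e1 e2 k : k <= n -> Ev l mu e1 e2 k = tmax (tplus l (e1 k)) (tplus mu (e2 k)).
Proof. evsolve. Qed.
Lemma Ev_u l mu e1 e2 k : k <= N1 -> Ev l mu e1 e2 (Lx + k) = tplus l (e1 k).
Proof. evsolve. Qed.
Lemma Ev_v l mu e1 e2 k : k <= N2 -> Ev l mu e1 e2 (Mx + k) = tplus mu (e2 k).
Proof. evsolve. Qed.
Lemma Ev_s l mu e1 e2 k : 1 <= k <= n -> Ev l mu e1 e2 (Sx + k) = tplus (e1 k) (tplus l (e1 k)).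
Proof. evsolve. Qed.
Lemma Ev_s' l mu e1 e2 k : 1 <= k <= n -> Ev l mu e1 e2 (Spx + k) = tplus (e2 k) (tplus mu (e2 k)).
Proof. evsolve. Qed.

Lemma construct l mu e1 e2 : tmax l mu = Some 0%R -> e1 0 = Some 0%R -> e2 0 = Some 0%R ->
  (l = None \/ tmsE m1 N1 Q1 e1) -> (mu = None \/ tmsE m2 N2 Q2 e2) -> Cond (Ev l mu e1 e2).
Proof.
  intros H0 H1 H2 Hl Hm.
  assert (E0 : Ev l mu e1 e2 0 = Some 0%R).
  { rewrite Ev_z by lia. rewrite H1, H2, !tplus_0_r. exact H0. }
  assert (EL : Ev l mu e1 e2 Lx = l).
  { replace Lx with (Lx + 0) by lia. rewrite Ev_u by lia. now rewrite H1, tplus_0_r. }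
  assert (EM : Ev l mu e1 e2 Mx = mu).
  { replace Mx with (Mx + 0) by lia. rewrite Ev_v by lia. now rewrite H2, tplus_0_r. }
  unfold Cond; cbn [tmax_list map fold_right]. rewrite E0, EL, EM, !tmax_None_r.
  split; [|split; [|split; [|split; [|split; [|split; [|split; [|split; [|split]]]]]]]].
  - eapply tmsE_ext; [|apply (tmsE_scale_or _ _ _ l e1 Hl)].
    intros k Hk. rewrite Ev_u by lia. reflexivity.
  - eapply tmsE_ext; [|apply (tmsE_scale_or _ _ _ mu e2 Hm)].
    intros k Hk. rewrite Ev_v by lia. reflexivity.
  - eapply tmax0_le_l; eauto.
  - eapply tmax0_le_r; eauto.
  - rewrite H0; apply tle_refl.
  - intros i Hi. rewrite tmax_None_r, Ev_u, Ev_z by lia. apply tmax_le_l.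
  - intros i Hi. rewrite tmax_None_r, Ev_v, Ev_z by lia. apply tmax_le_r.
  - intros i Hi. rewrite tmax_None_r, Ev_v, Ev_u, Ev_z by lia. apply tle_refl.
  - intros i Hi. rewrite Ev_u, Ev_s by lia. rewrite sq_eq. apply tle_refl.
  - intros i Hi. rewrite Ev_v, Ev_s' by lia. rewrite sq_eq. apply tle_refl.
Qed.

Lemma extract e : e 0 = Some 0%R -> Cond e ->
  tmax (e Lx) (e Mx) = Some 0%R /\
  (forall k, 1 <= k <= n -> e k = tmax (e (Lx + k)) (e (Mx + k))) /\
  (e Lx = None -> forall k, 1 <= k <= n -> e (Lx + k) = None) /\
  (e Mx = None -> forall k, 1 <= k <= n -> e (Mx + k) = None).
Proof.
  intros H0 (C1&C2&C3&C4&C5&C6&C7&C8&C9&C10).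
  cbn [tmax_list map fold_right] in *. rewrite H0 in *. rewrite !tmax_None_r in *.
  split; [|split; [|split]].
  - apply tle_antisym; [apply tmax_lub; auto|auto].
  - intros k Hk. replace k with (1 + (k - 1)) by lia.
    specialize (C6 (k-1) ltac:(lia)). specialize (C7 (k-1) ltac:(lia)). specialize (C8 (k-1) ltac:(lia)).
    rewrite tmax_None_r in *. apply tle_antisym; auto. apply tmax_lub; auto.
  - intros HL k Hk. replace k with (1 + (k - 1)) by lia.
    specialize (C9 (k-1) ltac:(lia)). rewrite HL in C9.
    apply tplus_self_None, tle_plus_None, C9.
  - intros HL k Hk. replace k with (1 + (k - 1)) by lia.
    specialize (C10 (k-1) ltac:(lia)). rewrite HL in C10.
    apply tplus_self_None, tle_plus_None, C10.
Qed.

Lemma comb_eq (e a b : nat -> trop) l mu :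
  (forall k, 1 <= k <= n -> e k = tmax (tplus l (a k)) (tplus mu (b k))) ->
  tcomb l mu (map a (seq 1 n)) (map b (seq 1 n)) = map e (seq 1 n).
Proof.
  intros H. unfold tcomb. rewrite zipWith_map. apply map_ext_in.
  intros k Hk; apply in_seq in Hk. symmetry; apply H; lia.
Qed.

Lemma main_sec (S1 S2 : tpoint -> Prop) :
  (forall p, S1 p <-> exists y, tms m1 N1 Q1 y /\ firstn n y = p) ->
  (forall p, S2 p <-> exists y, tms m2 N2 Q2 y /\ firstn n y = p) ->
  forall p, tconv n (fun p => S1 p \/ S2 p) p <->
    exists y, tms (fst (bdl blocks)) NN (snd (bdl blocks)) y /\ firstn n y = p.
Proof.
  intros HS1 HS2 p. split.
  - intros [Hlen Hall]. apply Hall.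
    + eapply proj_convex. intros; reflexivity.
    + intros z [Hz|Hz].
      * apply HS1 in Hz as [y1 [T1 F1]]. apply tms_iff in T1 as [L1 E1].
        exists (map (Ev (Some 0%R) None (xcoord y1) (fun _ => Some 0%R)) (seq 1 NN)). split.
        -- apply tms_of_val.
           ++ rewrite Ev_z by lia. tfin.
           ++ apply big_iff. apply construct; [tfin|reflexivity|reflexivity|right; exact E1|left; reflexivity].
        -- rewrite firstn_map_seq by ulia. rewrite <- F1, firstn_as_map by lia.
           apply map_ext_in; intros k Hk; apply in_seq in Hk. rewrite Ev_z by lia.
           rewrite tplus_0_l. apply tmax_None_r.
      * apply HS2 in Hz as [y2 [T2 F2]]. apply tms_iff in T2 as [L2 E2].
        exists (map (Ev None (Some 0%R) (fun _ => Some 0%R) (xcoord y2)) (seq 1 NN)). split.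
        -- apply tms_of_val.
           ++ rewrite Ev_z by lia. tfin.
           ++ apply big_iff. apply construct; [tfin|reflexivity|reflexivity|left; reflexivity|right; exact E2].
        -- rewrite firstn_map_seq by ulia. rewrite <- F2, firstn_as_map by lia.
           apply map_ext_in; intros k Hk; apply in_seq in Hk. rewrite Ev_z by lia.
           apply tplus_0_l.
  - intros [y [T F]]. apply tms_iff in T as [Ly Ey]. apply big_iff in Ey.
    destruct (extract (xcoord y) eq_refl Ey) as (X0 & Xz & XL & XM).
    destruct Ey as (C1 & C2 & _).
    split; [rewrite <- F, length_firstn; ulia|].
    intros X HX HS. rewrite <- F, firstn_as_map by ulia.
    set (e := xcoord y) in *.
    assert (G1 : forall c, e Lx = Some c ->
              S1 (map (fun k => tplus (Some (- c)%R) (e (Lx + k))) (seq 1 n))).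
    { intros c Hc. apply HS1. exists (map (fun k => tplus (Some (- c)%R) (e (Lx + k))) (seq 1 N1)).
      split.
      - apply tms_of_val.
        + rewrite Nat.add_0_r, Hc. apply tplus_neg_self.
        + exact (tmsE_scale _ _ _ (Some (- c)%R) (fun k => e (Lx + k)) C1).
      - apply firstn_map_seq; lia. }
    assert (G2 : forall c, e Mx = Some c ->
              S2 (map (fun k => tplus (Some (- c)%R) (e (Mx + k))) (seq 1 n))).
    { intros c Hc. apply HS2. exists (map (fun k => tplus (Some (- c)%R) (e (Mx + k))) (seq 1 N2)).
      split.
      - apply tms_of_val.
        + rewrite Nat.add_0_r, Hc. apply tplus_neg_self.
        + exact (tmsE_scale _ _ _ (Some (- c)%R) (fun k => e (Mx + k)) C2).
      - apply firstn_map_seq; lia. }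
    destruct (e Lx) as [c|] eqn:EL; destruct (e Mx) as [c'|] eqn:EM.
    + rewrite <- (comb_eq e (fun k => tplus (Some (- c)%R) (e (Lx + k)))
                          (fun k => tplus (Some (- c')%R) (e (Mx + k))) (Some c) (Some c')).
      * apply HX; [apply HS; left; apply G1; reflexivity
                  |apply HS; right; apply G2; reflexivity|exact X0].
      * intros k Hk. rewrite !tplus_cancel. auto.
    + rewrite <- (comb_eq e (fun k => tplus (Some (- c)%R) (e (Lx + k)))
                          (fun k => tplus (Some (- c)%R) (e (Lx + k))) (Some c) None).
      * apply HX; [apply HS; left; apply G1; reflexivity
                  |apply HS; left; apply G1; reflexivity|exact X0].
      * intros k Hk. rewrite !tplus_cancel. rewrite Xz by auto. rewrite (XM eq_refl k Hk). reflexivity.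
    + rewrite <- (comb_eq e (fun k => tplus (Some (- c')%R) (e (Mx + k)))
                          (fun k => tplus (Some (- c')%R) (e (Mx + k))) None (Some c')).
      * apply HX; [apply HS; right; apply G2; reflexivity
                  |apply HS; right; apply G2; reflexivity|exact X0].
      * intros k Hk. rewrite !tplus_cancel. rewrite Xz by auto. rewrite (XL eq_refl k Hk). reflexivity.
    + discriminate X0.
Qed.

Lemma symmetz_blocks : is_symmetric_fam m1 N1 Q1 -> is_metzler_fam m1 N1 Q1 ->
  is_symmetric_fam m2 N2 Q2 -> is_metzler_fam m2 N2 Q2 ->
  symB (fst (bdl blocks)) (snd (bdl blocks)) /\ metzB (fst (bdl blocks)) (snd (bdl blocks)).
Proof.
  intros S1 M1 S2 M2. apply symmetz_bdl. unfold blocks.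
  apply Forall_cons; [apply symmetz_shift; auto|].
  apply Forall_cons; [apply symmetz_shift; auto|].
  apply Forall_cons; [apply symmetz_linblock|].
  apply Forall_cons; [apply symmetz_linblock|].
  apply Forall_cons; [apply symmetz_linblock|].
  apply Forall_app; split; [apply Forall_map_seq; intros; apply symmetz_linblock|].
  apply Forall_app; split; [apply Forall_map_seq; intros; apply symmetz_linblock|].
  apply Forall_app; split; [apply Forall_map_seq; intros; apply symmetz_linblock|].
  apply Forall_app; split; apply Forall_map_seq; intros; apply symmetz_quadblock.
Qed.

End Main.

Theorem mainTheorem17 (n : nat) (S1 S2 : tpoint -> Prop) :
  proj_tms n S1 -> proj_tms n S2 ->
  proj_tms n (tconv n (fun p => S1 p \/ S2 p)).
Proof.
  intros [d1 [m1 [Q1 [Sy1 [Me1 H1]]]]] [d2 [m2 [Q2 [Sy2 [Me2 H2]]]]].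
  set (N1 := n + d1) in *. set (N2 := n + d2) in *.
  assert (HN : n + (NN n N1 N2 - n) = NN n N1 N2) by (unfold NN, Sx; lia).
  exists (NN n N1 N2 - n), (fst (bdl (blocks n N1 N2 m1 m2 Q1 Q2))),
         (snd (bdl (blocks n N1 N2 m1 m2 Q1 Q2))).
  rewrite HN.
  destruct (symmetz_blocks n N1 N2 m1 m2 Q1 Q2 Sy1 Me1 Sy2 Me2) as [SB MB].
  split; [|split].
  - intros k i j _ Hi Hj. apply SB; auto.
  - intros k i j _ Hi Hj Hij. apply MB; auto.
  - apply main_sec; auto; unfold N1, N2; lia.
Qed.
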